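(* If a natural number $n\ge2$ satisfies Robin's inequality $\sigma(n)<e^\gamma n\log(\log n)$, then $n$ satisfies the Kaneko–Lagarias inequality $\sigma(n)<\exp(H_n)\log(H_n)$ (and hence also the Lagarias inequality $\sigma(n)<H_n+\exp(H_n)\log(H_n)$).
   Context: $\sigma(n)=\sum_{d\mid n}d$ is the sum-of-divisors function, $H_n=1+\frac12+\cdots+\frac1n$ is the $n$-th harmonic number, and $\gamma$ is the Euler–Mascheroni constant. *)

(* Defs.v *)
From Stdlib Require Import Reals Lra Lia List.
From Coquelicot Require Import Coquelicot.
Open Scope R_scope.

Definition sigma_div (n : nat) : nat :=
  fold_right Nat.add 0%nat
    (filter (fun d => Nat.eqb (Nat.modulo n d) 0) (List.seq 1 n)).

Definition harmonic (n : nat) : R :=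
  fold_right Rplus 0 (map (fun k => / INR k) (List.seq 1 n)).

Definition euler_gamma : R :=
  real (Lim_seq (fun n => harmonic n - ln (INR n))).

(* Main.v *)
Require Import Defs.
From Stdlib Require Import Reals Lra Lia List.
From Coquelicot Require Import Coquelicot.
Open Scope R_scope.

Lemma fold_plus_acc (l : list R) (a : R) :
  fold_right Rplus a l = fold_right Rplus 0 l + a.
Proof. induction l as [|x l IH]; simpl; [lra| rewrite IH; lra]. Qed.

Lemma harmonic_S (k : nat) : harmonic (S k) = harmonic k + / INR (S k).
Proof.
  unfold harmonic. rewrite seq_S, map_app, fold_right_app. simpl.
  rewrite fold_plus_acc. replace (1 + k)%nat with (S k) by lia. lra.
Qed.

Lemma ln_step_upper (k : nat) : ln (INR (S (S k))) - ln (INR (S k)) <= / INR (S k).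
Proof.
  assert (Hk : 0 < INR (S k)) by (apply lt_0_INR; lia).
  assert (E : INR (S (S k)) = INR (S k) * (1 + / INR (S k))).
  { rewrite (S_INR (S k)). field. lra. }
  assert (0 < / INR (S k)) by (apply Rinv_0_lt_compat; lra).
  rewrite E, ln_mult; try lra.
  assert (ln (1 + / INR (S k)) <= / INR (S k)).
  { assert (Q : ln (1 + / INR (S k)) <= ln (exp (/ INR (S k)))).
    { apply ln_le. lra. apply exp_ineq1_le. }
    rewrite ln_exp in Q. exact Q. }
  lra.
Qed.

Lemma ln_step_lower (k : nat) : / INR (S (S k)) <= ln (INR (S (S k))) - ln (INR (S k)).
Proof.
  assert (Hk : 0 < INR (S k)) by (apply lt_0_INR; lia).
  assert (Hk2 : INR (S (S k)) = INR (S k) + 1) by apply S_INR.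
  assert (H2 : 0 < INR (S (S k))) by lra.
  assert (E : INR (S k) = INR (S (S k)) * (1 + - / INR (S (S k)))).
  { rewrite Hk2. field. lra. }
  assert (Hp : 0 < 1 + - / INR (S (S k))).
  { rewrite Hk2. assert (/ (INR (S k) + 1) < 1).
    { rewrite <- Rinv_1. apply Rinv_lt_contravar; lra. } lra. }
  rewrite E at 1. rewrite ln_mult; try lra.
  assert (ln (1 + - / INR (S (S k))) <= - / INR (S (S k))).
  { assert (Q : ln (1 + - / INR (S (S k))) <= ln (exp (- / INR (S (S k))))).
    { apply ln_le. lra. apply exp_ineq1_le. }
    rewrite ln_exp in Q. exact Q. }
  lra.
Qed.

Lemma harmonic_ge_ln (n : nat) : ln (INR (S n)) <= harmonic n.
Proof.
  induction n as [|k IH].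
  - unfold harmonic; simpl. rewrite ln_1. lra.
  - rewrite harmonic_S. pose proof (ln_step_upper k). lra.
Qed.

Definition a_seq (n : nat) : R := harmonic n - ln (INR n).

Lemma a_dec (k : nat) : a_seq (S (S k)) <= a_seq (S k).
Proof.
  unfold a_seq. rewrite (harmonic_S (S k)). pose proof (ln_step_lower k). lra.
Qed.

Lemma a_dec_le (N m : nat) : (1 <= N)%nat -> (N <= m)%nat -> a_seq m <= a_seq N.
Proof.
  intros HN Hm. induction Hm as [|m Hm IH]; [lra|].
  destruct m as [|m]; [lia|]. pose proof (a_dec m). lra.
Qed.

Lemma a_nonneg (n : nat) : 0 <= a_seq n.
Proof.
  unfold a_seq. pose proof (harmonic_ge_ln n).
  destruct n as [|n].
  - clear H. unfold harmonic. simpl. unfold ln. case Rlt_dec; intros r; [exfalso; exact (Rlt_irrefl 0 r)| lra].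
  - assert (ln (INR (S n)) <= ln (INR (S (S n)))).
    { apply ln_le. apply lt_0_INR; lia. apply le_INR; lia. }
    lra.
Qed.

Lemma gamma_le (N : nat) : (1 <= N)%nat -> euler_gamma <= harmonic N - ln (INR N).
Proof.
  intros HN. unfold euler_gamma.
  assert (Hle : Rbar_le (Lim_seq (fun n => harmonic n - ln (INR n)))
                        (Lim_seq (fun _ => harmonic N - ln (INR N)))).
  { apply Lim_seq_le_loc. exists N. intros m Hm. apply (a_dec_le N m HN Hm). }
  rewrite Lim_seq_const in Hle.
  destruct (Lim_seq (fun n => harmonic n - ln (INR n))) as [l| |]; simpl in *.
  - exact Hle.
  - contradiction.
  - apply (a_nonneg N).
Qed.

Theorem mainTheorem20 (n : nat) :
  (2 <= n)%nat ->
  INR (sigma_div n) < exp euler_gamma * INR n * ln (ln (INR n)) ->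
  INR (sigma_div n) < exp (harmonic n) * ln (harmonic n) /\
  INR (sigma_div n) < harmonic n + exp (harmonic n) * ln (harmonic n).
Proof.
  intros Hn Hrob.
  set (s := INR (sigma_div n)) in *.
  assert (Hs : 0 <= s) by apply pos_INR.
  assert (Hn2 : 2 <= INR n) by (apply (le_INR 2 n) in Hn; simpl in Hn; lra).
  set (L := ln (INR n)).
  assert (HL : 0 < L).
  { unfold L. rewrite <- ln_1. apply ln_increasing; lra. }
  assert (Hg := gamma_le n ltac:(lia)).
  set (H := harmonic n) in *.
  assert (HHL : L < H).
  { destruct n as [|m]; [lia|]. pose proof (harmonic_ge_ln (S m)).
    unfold L, H. assert (ln (INR (S m)) < ln (INR (S (S m)))).
    { apply ln_increasing; [lra|]. rewrite (S_INR (S m)). lra. } lra. }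
  assert (Heg : 0 < exp euler_gamma) by apply exp_pos.
  assert (HlnL : 0 < ln L).
  { destruct (Rle_or_lt (ln L) 0) as [Hle|Hlt]; [|exact Hlt].
    exfalso. assert (exp euler_gamma * INR n * ln L <= 0).
    { assert (0 < exp euler_gamma * INR n) by (apply Rmult_lt_0_compat; lra). nra. }
    fold L in Hrob. lra. }
  assert (HlnH : ln L < ln H) by (apply ln_increasing; lra).
  assert (HexpH : exp euler_gamma * INR n <= exp H).
  { replace (exp euler_gamma * INR n) with (exp (euler_gamma + L)).
    - destruct (Req_dec (euler_gamma + L) H) as [E|E]; [rewrite E; lra|].
      left. apply exp_increasing. fold L in Hg. lra.
    - rewrite exp_plus. unfold L. rewrite exp_ln; lra. }
  assert (HX : 0 < exp euler_gamma * INR n) by (apply Rmult_lt_0_compat; lra).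
  fold L in Hrob.
  assert (K : s < exp H * ln H).
  { assert (exp euler_gamma * INR n * ln L < exp euler_gamma * INR n * ln H)
      by (apply Rmult_lt_compat_l; lra).
    assert (exp euler_gamma * INR n * ln H <= exp H * ln H)
      by (apply Rmult_le_compat_r; lra).
    lra. }
  split; [exact K | lra].
Qed.
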